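(* Let $T$ be a trigraph in $\mathcal F$ that admits no balanced skew-partition and contains no antihole of length six. If $T$ is unfavorable, then either $T$ is complete or $|V(T)|\le 5$.
   Context: A trigraph $T$ consists of a finite set $V(T)$ and a map $\theta:\binom{V(T)}{2}\to\{-1,0,1\}$. Two distinct vertices $u,v$ are strongly adjacent if $\theta(uv)=1$, strongly antiadjacent if $\theta(uv)=-1$, and semiadjacent (a switchable pair) if $\theta(uv)=0$; they are adjacent if $\theta(uv)\in\{0,1\}$ and antiadjacent if $\theta(uv)\in\{0,-1\}$. $N(v)$ is the set of vertices adjacent to $v$. An edge (antiedge) is an adjacent (antiadjacent) pair; a strong edge (strong antiedge) is a strongly adjacent (strongly antiadjacent) pair. A vertex/set is strongly complete (strongly anticomplete, complete, anticomplete) to a disjoint set if every pair between them is strongly adjacent (strongly antiadjacent, adjacent, antiadjacent). The complement $\overline T$ has vertex set $V(T)$ and adjacency function $-\theta$. For $X\subseteq V(T)$, $T|X$ is the trigraph on $X$ with $\theta$ restricted, and $T\setminus X=T|(V(T)\setminus X)$; $T$ contains $H$ if $H$ is isomorphic to some $T|X$. A clique (strong clique) is a set of pairwise adjacent (strongly adjacent) vertices; a stable set (strongly stable set) is a set of pairwise antiadjacent (strongly antiadjacent) vertices; $T$ is complete if $V(T)$ is a clique. $T$ is a graph if it has no switchable pair. A realization of $T$ is a graph on $V(T)$ in which every strong edge is an edge and every strong antiedge is a non-edge; the full realization is the realization in which all switchable pairs are edges. A set $X$ is connected if the full realization of $T|X$ is connected, and anticonnected if the graph on $X$ whose edges are the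 antiadjacent pairs of $T|X$ is connected; components (anticomponents) are maximal connected (anticonnected) subsets. A path is a sequence of distinct vertices $p_1,\dots,p_k$ such that $p_i,p_j$ are adjacent when $|i-j|=1$ and antiadjacent when $|i-j|>1$; its length is $k-1$, and it is even or odd according to its length. An antipath is an induced subtrigraph whose complement is a path of $\overline T$. A hole of length $k\ge5$ consists of vertices $h_1,\dots,h_k$ with $h_i,h_j$ adjacent if $|i-j|\in\{1,k-1\}$ and antiadjacent otherwise; an antihole is an induced subtrigraph whose complement is a hole of $\overline T$ (length = number of vertices). $T$ is Berge if it contains no hole of odd length and no antihole of odd length. An even pair of $T$ is a strongly antiadjacent pair $\{u,v\}$ such that every path from $u$ to $v$ in $T$ has even length. $\Sigma(T)$ is the graph on $V(T)$ whose edges are the switchable pairs of $T$; a switchable component is a connected component of $\Sigma(T)$ with at least two vertices. $\mathcal F$ is the class of Berge trigraphs $T$ such that: (1) $T$ has at most one switchable component, and it has at most two edges; (2) if the switchable component has exactly one edge $xy$, then $N(x)\cap N(y)=\emptyset$ (it is called small); (3) if it has two edges, with $v$ the vertex of degree two in $\Sigma(T)$ and $x,y$ its neighbours, then $v$ is strongly anticomplete to $V(T)\setminus\{v,x,y\}$, $x$ is strongly antiadjacent to $y$, and $N(x)\cap N(y)=\{v\}$ (it is called light). For $T\in\mathcal F$, $D$ denotes the vertex set of its switchable component ($D=\emptyset$ if $T$ has no switchable pair). A pair $\{u,v\}$ is disjoint from the switchable component if $\{u,v\}\cap D=\emptyset$. A trigraph $T\in\mathcal F$ is favorable if (1) $|V(T)|\ge5$;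 (2) $T$ has a strongly antiadjacent pair $\{u,v\}$ disjoint from $D$; and (3) if $D=\{x,y\}$ is small, then at least one of $V(T)\setminus(D\cup N(x))$, $V(T)\setminus(D\cup N(y))$ is not a clique. It is unfavorable otherwise. A skew-partition of $T$ is a partition $(A,B)$ of $V(T)$ with $A$ not connected and $B$ not anticonnected; it is balanced if there is no odd path of length greater than one with both ends in $B$ and interior in $A$, and no odd antipath of length greater than one with both ends in $A$ and interior in $B$. *)

(* Defs.v *)
From HB Require Import structures.
From mathcomp Require Import all_boot.

Set Implicit Arguments.
Unset Strict Implicit.
Unset Printing Implicit Defensive.

(* Values of the adjacency function theta : 1, 0, -1. *)
Inductive tri := TStrongAdj | TSemi | TStrongAnti .

(* A trigraph with vertex set V : theta is a symmetric map on pairs;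
   its value on the diagonal is irrelevant (never used). *)
Record trigraph (V : finType) := Trigraph {
  theta : V -> V -> tri;
  theta_sym : forall u v, theta u v = theta v u }.

Section Trigraphs.
Variables (V : finType) (T : trigraph V).

Definition adj (u v : V) : bool :=
  (u != v) && (match theta T u v with TStrongAnti => false | _ => true end).
Definition antiadj (u v : V) : bool :=
  (u != v) && (match theta T u v with TStrongAdj => false | _ => true end).
Definition sadj (u v : V) : bool :=
  (u != v) && (match theta T u v with TStrongAdj => true | _ => false end).
Definition santiadj (u v : V) : bool :=
  (u != v) && (match theta T u v with TStrongAnti => true | _ => false end).
Definition semiadj (u v : V) : bool :=
  (u != v) && (match theta T u v with TSemi => true | _ => false end).

Definition nbhd (v : V) : {set V} := [set u | adj v u].

Definition clique (X : {set V}) : Prop :=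
  forall u v, u \in X -> v \in X -> u != v -> adj u v.
Definition complete : Prop := clique setT.

Definition rel_in (X : {set V}) (r : rel V) : rel V :=
  fun u v => [&& u \in X, v \in X & r u v].

(* X is connected: full realization of T|X is connected (empty set and
   singletons are connected). *)
Definition connected_set (X : {set V}) : Prop :=
  forall u v, u \in X -> v \in X -> connect (rel_in X adj) u v.
Definition anticonnected_set (X : {set V}) : Prop :=
  forall u v, u \in X -> v \in X -> connect (rel_in X antiadj) u v.

Definition path_like (near far : rel V) (p : seq V) : Prop :=
  uniq p /\
  forall i j : 'I_(size p), i < j ->
    if (j : nat) == i.+1 then near (tnth (in_tuple p) i) (tnth (in_tuple p) j)
    else far (tnth (in_tuple p) i) (tnth (in_tuple p) j).

(* path of T (length size p - 1); antipath = path of the complement *)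
Definition tpath (p : seq V) : Prop := path_like adj antiadj p.
Definition tantipath (p : seq V) : Prop := path_like antiadj adj p.

Definition hole_like (near far : rel V) (h : seq V) : Prop :=
  5 <= size h /\ uniq h /\
  forall i j : 'I_(size h), i < j ->
    if (j - i == 1) || (j - i == (size h).-1)
    then near (tnth (in_tuple h) i) (tnth (in_tuple h) j)
    else far (tnth (in_tuple h) i) (tnth (in_tuple h) j).

Definition hole (h : seq V) : Prop := hole_like adj antiadj h.
Definition antihole (h : seq V) : Prop := hole_like antiadj adj h.

Definition Berge : Prop :=
  (forall h, hole h -> ~~ odd (size h)) /\
  (forall h, antihole h -> ~~ odd (size h)).

Definition skew_partition (A : {set V}) : Prop :=
  ~ connected_set A /\ ~ anticonnected_set (~: A).

(* balanced: with B = V \ A; a path x :: q ++ [y] has length size q + 1 *)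
Definition balanced (A : {set V}) : Prop :=
  (forall x y q, tpath (x :: rcons q y) -> x \in ~: A -> y \in ~: A ->
     all (fun z => z \in A) q -> 1 < (size q).+1 -> ~~ odd (size q).+1) /\
  (forall x y q, tantipath (x :: rcons q y) -> x \in A -> y \in A ->
     all (fun z => z \in ~: A) q -> 1 < (size q).+1 -> ~~ odd (size q).+1).

Definition balanced_skew_partition (A : {set V}) : Prop :=
  skew_partition A /\ balanced A.

(* switchable components: components of Sigma(T) with >= 2 vertices *)
Definition swcomp (D : {set V}) : bool :=
  (1 < #|D|) && [exists x, D == [set y | connect semiadj x y]].

Definition swedges (D : {set V}) : {set {set V}} :=
  [set e : {set V} | (e \subset D) &&
     [exists x, exists y, (e == [set x; y]) && semiadj x y]].

Definition swD : {set V} := [set x | [exists D : {set V}, swcomp D && (x \in D)]].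

Definition inF : Prop :=
  Berge /\
  (forall D1 D2, swcomp D1 -> swcomp D2 -> D1 = D2) /\
  (forall D, swcomp D -> #|swedges D| <= 2) /\
  (forall D x y, swcomp D -> #|swedges D| = 1 -> x \in D -> semiadj x y ->
     nbhd x :&: nbhd y = set0) /\
  (forall D v x y, swcomp D -> #|swedges D| = 2 -> v \in D ->
     semiadj v x -> semiadj v y -> x != y ->
     (forall w, w \notin [set v; x; y] -> santiadj v w) /\
     santiadj x y /\ nbhd x :&: nbhd y = [set v]).

Definition favorable : Prop :=
  5 <= #|V| /\
  (exists u v, santiadj u v /\ u \notin swD /\ v \notin swD) /\
  (forall x y, x != y -> swD = [set x; y] ->
     ~ clique (~: (swD :|: nbhd x)) \/ ~ clique (~: (swD :|: nbhd y))).

End Trigraphs.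

(* Main.v *)
Require Import Defs.
From HB Require Import structures.
From mathcomp Require Import all_boot zify.
From Stdlib Require Import Classical.
Set Implicit Arguments.
Unset Strict Implicit.
Unset Printing Implicit Defensive.

Section Basics.
Variables (V : finType) (T : trigraph V).
Local Notation adj := (adj T).
Local Notation antiadj := (antiadj T).
Local Notation semiadj := (semiadj T).
Local Notation santiadj := (santiadj T).
Local Notation swD := (swD T).

Lemma adj_sym u v : adj u v = adj v u.
Proof. by rewrite /Defs.adj eq_sym theta_sym. Qed.
Lemma antiadj_sym u v : antiadj u v = antiadj v u.
Proof. by rewrite /Defs.antiadj eq_sym theta_sym. Qed.
Lemma semiadj_sym u v : semiadj u v = semiadj v u.
Proof. by rewrite /Defs.semiadj eq_sym theta_sym. Qed.
Lemma adj_neq u v : adj u v -> u != v.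
Proof. by case/andP. Qed.
Lemma antiadj_neq u v : antiadj u v -> u != v.
Proof. by case/andP. Qed.
Lemma semi_adj u v : semiadj u v -> adj u v.
Proof. by rewrite /Defs.semiadj /Defs.adj; case: (theta T u v); rewrite ?andbF. Qed.
Lemma semi_anti u v : semiadj u v -> antiadj u v.
Proof. by rewrite /Defs.semiadj /Defs.antiadj; case: (theta T u v); rewrite ?andbF. Qed.
Lemma santi_anti u v : santiadj u v -> antiadj u v.
Proof. by rewrite /Defs.santiadj /Defs.antiadj; case: (theta T u v); rewrite ?andbF. Qed.
Lemma santi_nadj u v : santiadj u v -> ~~ adj u v.
Proof. by rewrite /Defs.santiadj /Defs.adj; case: (theta T u v); case: (u != v). Qed.
Lemma nadj_anti u v : u != v -> ~~ adj u v -> antiadj u v.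
Proof. by rewrite /Defs.adj /Defs.antiadj => ->; case: (theta T u v). Qed.
Lemma nadj_santi u v : u != v -> ~~ adj u v -> santiadj u v.
Proof. by rewrite /Defs.adj /Defs.santiadj => ->; case: (theta T u v). Qed.

Lemma semi_swD u v : semiadj u v -> u \in swD.
Proof.
move=> Huv; rewrite inE; apply/existsP; exists [set y | connect semiadj u y].
rewrite inE connect0 andbT /swcomp; apply/andP; split.
  apply/card_gt1P; exists u, v; rewrite !inE connect0 connect1 //.
  by case/andP: Huv.
by apply/existsP; exists u.
Qed.

Lemma strong_anti u v : u \notin swD -> antiadj u v = (u != v) && ~~ adj u v.
Proof.
move=> Hu; rewrite /Defs.antiadj /Defs.adj.
case Huv: (u != v) => //=.
case Ht: (theta T u v) => //.
by case/negP: Hu; apply: (@semi_swD u v); rewrite /Defs.semiadj Huv Ht.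
Qed.

Lemma strong_adj_nanti u v : (u \notin swD) \/ (v \notin swD) -> adj u v -> ~~ antiadj u v.
Proof.
case=> H Ha.
  by rewrite strong_anti // Ha andbF.
by rewrite antiadj_sym strong_anti // adj_sym Ha andbF.
Qed.

Lemma strong_nadj_anti u v : (u \notin swD) \/ (v \notin swD) -> u != v -> ~~ adj u v -> antiadj u v.
Proof. by move=> _; apply: nadj_anti. Qed.

End Basics.
Section Paths.
Variables (V : finType).
Implicit Types (near far : rel V).

Lemma path_ends near far x y q :
  path_like near far (x :: rcons q y) -> 0 < size q -> far x y.
Proof.
case=> _ H Hq.
have Hs : size (x :: rcons q y) = (size q).+2 by rewrite /= size_rcons.
have H0 : 0 < size (x :: rcons q y) by rewrite Hs.
have H1 : (size q).+1 < size (x :: rcons q y) by rewrite Hs.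
have := H (Ordinal H0) (Ordinal H1) isT.
have Hq0 : (size q == 0) = false by case: (size q) Hq.
rewrite /= eqSS Hq0 !(tnth_nth x) /= nth_rcons ltnn eqxx //.
Qed.

Lemma path_first2 near far x y q :
  path_like near far (x :: rcons q y) -> 1 < size q ->
  exists a b, [/\ a \in q, b \in q & near a b].
Proof.
case=> _ H Hq.
have Hs : size (x :: rcons q y) = (size q).+2 by rewrite /= size_rcons.
have H0 : 1 < size (x :: rcons q y) by rewrite Hs.
have H1 : 2 < size (x :: rcons q y) by rewrite Hs; case: (size q) Hq => [|[|n]].
have := H (Ordinal H0) (Ordinal H1) isT.
rewrite /= !(tnth_nth x) /= !nth_rcons.
idtac.
have Hq0 : 0 < size q by apply: ltnW.
rewrite Hq Hq0 => Hn.
by exists (nth x q 0), (nth x q 1); split => //; apply: mem_nth.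

Qed.

End Paths.
Section Holes.
Variables (V : finType).
Implicit Types (near far : rel V).

Lemma hole_like5 near far a b c d e :
  uniq [:: a; b; c; d; e] ->
  near a b -> near b c -> near c d -> near d e -> near a e ->
  far a c -> far a d -> far b d -> far b e -> far c e ->
  hole_like near far [:: a; b; c; d; e].
Proof.
move=> U ab bc cd de ae ac ad bd be ce; split => //; split => //.
move=> [i Hi] [j Hj] /= Hij; rewrite !(tnth_nth a) /=.
by case: i Hi Hij => [|[|[|[|[|i]]]]] Hi Hij; case: j Hj Hij => [|[|[|[|[|j]]]]] Hj Hij.
Qed.

Lemma hole_like6 near far a b c d e f :
  uniq [:: a; b; c; d; e; f] ->
  near a b -> near b c -> near c d -> near d e -> near e f -> near a f ->
  far a c -> far a d -> far a e -> far b d -> far b e -> far b f ->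
  far c e -> far c f -> far d f ->
  hole_like near far [:: a; b; c; d; e; f].
Proof.
move=> U ab bc cd de ef af ac ad ae bd be bf ce cf df; split => //; split => //.
move=> [i Hi] [j Hj] /= Hij; rewrite !(tnth_nth a) /=.
by case: i Hi Hij => [|[|[|[|[|[|i]]]]]] Hi Hij; case: j Hj Hij => [|[|[|[|[|[|j]]]]]] Hj Hij.
Qed.
End Holes.

Section Skew.
Variables (V : finType) (T : trigraph V).
Local Notation adj := (adj T).
Local Notation antiadj := (antiadj T).
Local Notation semiadj := (semiadj T).
Local Notation santiadj := (santiadj T).
Local Notation swD := (swD T).

Lemma noout_connect (r : rel V) u w : (forall z, r u z = false) -> connect r u w -> u = w.
Proof. by move=> H /connectP [[|z p] /= Hp ->] //; rewrite H in Hp. Qed.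

Lemma isolated_nconn (A : {set V}) z u : z \in A -> u \in A -> u != z ->
  (forall w, w \in A -> ~~ adj z w) -> ~ connected_set T A.
Proof.
move=> Hz Hu Huz H Hc.
have Hr : forall w, rel_in A adj z w = false.
  move=> w; rewrite /rel_in; case Hw: (w \in A); rewrite ?andbF //.
  by rewrite (negbTE (H w Hw)) !andbF.
by move: (noout_connect Hr (Hc z u Hz Hu)) => E; rewrite E eqxx in Huz.
Qed.

Lemma L2 (A : {set V}) :
  (forall u v, u \notin A -> v \notin A -> u != v -> ~~ antiadj u v) ->
  1 < #|~: A| -> ~ connected_set T A -> balanced_skew_partition T A.
Proof.
move=> Hs Hc Hnc; split; first split => //.
  move=> Hac; case/card_gt1P: Hc => u [v [Hu Hv Huv]].
  have Hr : forall z, rel_in (~: A) antiadj u z = false.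
    move=> z; rewrite /rel_in; case Hz: (z \in ~: A); rewrite ?andbF //.
    case E: (u == z); first by rewrite (eqP E) /Defs.antiadj eqxx !andbF.
    by move: Hu Hz; rewrite !inE => Hu Hz; rewrite (negbTE (Hs _ _ Hu Hz (negbT E))) !andbF.
  by move: (noout_connect Hr (Hac u v Hu Hv)) => E; rewrite E eqxx in Huv.
split.
  move=> x y q Hp Hx Hy Hq Hsz.
  have Hf := path_ends Hp Hsz.
  move: Hx Hy; rewrite !inE => Hx Hy.
  by move: (Hs _ _ Hx Hy (antiadj_neq Hf)); rewrite Hf.
move=> x y q Hp Hx Hy Hq Hsz.
case: (ltnP 1 (size q)) => H.
  have [a [b [Ha Hb Hab]]] := path_first2 Hp H.
  move/allP: Hq => Hq.
  move: (Hq a Ha) (Hq b Hb); rewrite !inE => Ha' Hb'.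
  by move: (Hs _ _ Ha' Hb' (antiadj_neq Hab)); rewrite Hab.
by case: (size q) Hsz H => [|[|n]].
Qed.

Lemma pair_nadj a b p q : ~~ adj a b -> p \in [set a; b] -> q \in [set a; b] -> ~~ adj p q.
Proof.
move=> H; rewrite !inE; case/orP => /eqP->; case/orP => /eqP-> //;
  try by rewrite /Defs.adj eqxx.
by rewrite adj_sym.
Qed.

Lemma L1 a b u w : a != b -> ~~ adj a b ->
  u \notin [set a; b] -> w \notin [set a; b] -> u != w ->
  (forall z, z \notin [set a; b] -> z != u -> ~~ antiadj u z) ->
  balanced_skew_partition T [set a; b].
Proof.
move=> Hab Hnab Hu Hw Huw Hs; split; first split.
- apply: (@isolated_nconn _ a b); rewrite ?inE ?eqxx ?orbT // 1?eq_sym //.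
  by move=> z Hz; apply: pair_nadj Hnab _ Hz; rewrite !inE eqxx.
- move=> Hac.
  have Hr : forall z, rel_in (~: [set a; b]) antiadj u z = false.
    move=> z; rewrite /rel_in; case Hz: (z \in ~: [set a; b]); rewrite ?andbF //.
    case E: (z == u); first by rewrite (eqP E) /Defs.antiadj eqxx !andbF.
    by move: Hz; rewrite inE => Hz; rewrite (negbTE (Hs _ Hz (negbT E))) !andbF.
  have Hu' : u \in ~: [set a; b] by rewrite inE.
  have Hw' : w \in ~: [set a; b] by rewrite inE.
  by move: (noout_connect Hr (Hac u w Hu' Hw')) => E; rewrite E eqxx in Huw.
split.
  move=> x y q Hp Hx Hy Hq Hsz.
  case: (ltnP 1 (size q)) => H.
    have [p [p' [Hp1 Hp2 Hpp]]] := path_first2 Hp H.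
    move/allP: Hq => Hq.
    by move: (pair_nadj Hnab (Hq p Hp1) (Hq p' Hp2)); rewrite Hpp.
  by case: (size q) Hsz H => [|[|n]].
move=> x y q Hp Hx Hy Hq Hsz.
have Hf := path_ends Hp Hsz.
by move: (pair_nadj Hnab Hx Hy); rewrite Hf.
Qed.

End Skew.

Section Struct.
Variables (V : finType) (T : trigraph V).
Local Notation adj := (adj T).
Local Notation antiadj := (antiadj T).
Local Notation semiadj := (semiadj T).
Local Notation santiadj := (santiadj T).
Local Notation swD := (swD T).
Local Notation swcomp := (swcomp T).
Local Notation swedges := (swedges T).

Lemma semi_symm : symmetric semiadj.
Proof. by move=> u v; rewrite semiadj_sym. Qed.

Lemma semi_neq u v : semiadj u v -> u != v.
Proof. by case/andP. Qed.

Lemma comp_closed D w w' : swcomp D -> w \in D -> semiadj w w' -> w' \in D.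
Proof.
case/andP=> _ /existsP [x0 /eqP ->]; rewrite !inE => Hw Hs.
exact: connect_trans Hw (connect1 Hs).
Qed.

Lemma comp_partner D w : swcomp D -> w \in D -> exists w', w' \in D /\ semiadj w w'.
Proof.
move=> HD Hw; have HD' := HD; case/andP: HD' => Hc /existsP [x0 /eqP HDe].
have [z [Hz Hzw]] : exists z, z \in D /\ z != w.
  case/card_gt1P: Hc => z1 [z2 [H1 H2 H12]].
  case E: (z1 == w); last by exists z1; rewrite E.
  by exists z2; split => //; rewrite -(eqP E) eq_sym.
have Hcs := sym_connect_sym semi_symm.
have Hwz : connect semiadj w z.
  move: Hw Hz; rewrite HDe !inE => Hw Hz.
  by apply: connect_trans Hz; rewrite Hcs.
case/connectP: Hwz => [[|w' p] /= Hp Hl]; first by rewrite Hl eqxx in Hzw.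
case/andP: Hp => Hww' _; exists w'; split => //.
exact: comp_closed Hww'.
Qed.

Lemma set2_sub_eq (a b p q : V) : p != q -> [set p; q] \subset [set a; b] -> [set p; q] = [set a; b].
Proof.
move=> Hpq Hs; apply/eqP; rewrite eqEcard Hs /= !cards2 Hpq.
by case: (a != b).
Qed.

Lemma light_struct D v x y : swcomp D -> #|swedges D| <= 2 -> v \in D ->
  semiadj v x -> semiadj v y -> x != y ->
  D = [set v; x; y] /\ #|swedges D| = 2.
Proof.
move=> HD HE Hv Hvx Hvy Hxy.
have Hx := comp_closed HD Hv Hvx; have Hy := comp_closed HD Hv Hvy.
have E1 : [set v; x] \in swedges D.
  rewrite inE; apply/andP; split.
    by apply/subsetP => z; rewrite !inE => /orP [] /eqP ->.
  by apply/existsP; exists v; apply/existsP; exists x; rewrite eqxx.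
have E2 : [set v; y] \in swedges D.
  rewrite inE; apply/andP; split.
    by apply/subsetP => z; rewrite !inE => /orP [] /eqP ->.
  by apply/existsP; exists v; apply/existsP; exists y; rewrite eqxx.
have E12 : [set v; x] != [set v; y].
  apply/eqP => E; have : y \in [set v; x] by rewrite E !inE eqxx orbT.
  rewrite !inE => /orP [/eqP Hyv|/eqP Hyx].
    by move: (semi_neq Hvy); rewrite Hyv eqxx.
  by move: Hxy; rewrite Hyx eqxx.
have HEe : swedges D = [set [set v; x]; [set v; y]].
  apply/eqP; rewrite eq_sym eqEcard cards2 E12.
  rewrite HE andbT; apply/subsetP => e /set2P [] -> //.
split; last by rewrite HEe cards2 E12.
apply/setP => d; apply/idP/idP; last first.
  by rewrite !inE => /orP [/orP [] | ] /eqP ->.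
move=> Hd; have [d' [Hd' Hdd']] := comp_partner HD Hd.
have : [set d; d'] \in swedges D.
  rewrite inE; apply/andP; split.
    by apply/subsetP => z; rewrite !inE => /orP [] /eqP ->.
  by apply/existsP; exists d; apply/existsP; exists d'; rewrite eqxx.
rewrite HEe !inE => /orP [] /eqP E.
  have : d \in [set v; x] by rewrite -E !inE eqxx.
  by rewrite !inE => /orP [] ->; rewrite ?orbT.
have : d \in [set v; y] by rewrite -E !inE eqxx.
by rewrite !inE => /orP [] ->; rewrite ?orbT.
Qed.

Lemma comp_struct D : swcomp D -> #|swedges D| <= 2 ->
  (exists x y, [/\ semiadj x y, D = [set x; y] & #|swedges D| = 1]) \/
  (exists v x y, [/\ semiadj v x, semiadj v y, x != y, D = [set v; x; y] & #|swedges D| = 2]).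
Proof.
move=> HD HE.
have HD' := HD; case/andP: HD' => Hc /existsP [x0 /eqP HDe].
have [a Ha] : exists a, a \in D.
  by case/card_gt1P: Hc => z1 [z2 [H1 _ _]]; exists z1.
have [b [Hb Hab]] := comp_partner HD Ha.
case: (classic (forall s t, s \in [set a; b] -> semiadj s t -> t \in [set a; b])) => Hcl.
  left; exists a, b.
  have HcS : closed semiadj [set a; b].
    move=> s t Hst; apply/idP/idP => H; first exact: Hcl Hst.
    by apply: (Hcl t s) => //; rewrite semiadj_sym.
  have Hx0 : x0 \in [set a; b].
    move: Ha; rewrite HDe inE => Ha.
    by rewrite (closed_connect HcS Ha) !inE eqxx.
  have HDab : D = [set a; b].
    apply/setP => d; apply/idP/idP.
      rewrite HDe inE => Hd; by rewrite -(closed_connect HcS Hd).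
    by rewrite !inE => /orP [] /eqP ->.
  have HEe : swedges D = [set [set a; b]].
    apply/setP => e; rewrite !inE; apply/idP/idP.
      case/andP => Hsub /existsP [p /existsP [q /andP [/eqP He Hpq]]].
      by rewrite He (@set2_sub_eq a b) // -?HDab -?He // semi_neq.
    move/eqP => ->; rewrite HDab subxx /=.
    by apply/existsP; exists a; apply/existsP; exists b; rewrite eqxx.
  by split => //; rewrite HEe cards1.
right.
have [s [t [Hs Hst Ht]]] : exists s t, [/\ s \in [set a; b], semiadj s t & t \notin [set a; b]].
  apply: NNPP => Hn; apply: Hcl => s t Hs Hst; apply: NNPP => Ht.
  by apply: Hn; exists s, t; split => //; apply/negP.
have Hs' : s \in D by move: Hs; rewrite !inE => /orP [] /eqP ->.
case/set2P: Hs => Es; subst s.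
  have Hbt : b != t by apply: contraNneq Ht => <-; rewrite !inE eqxx orbT.
  have [HD1 HD2] := light_struct HD HE Ha Hab Hst Hbt.
  by exists a, b, t; split.
have Hba : semiadj b a by rewrite semiadj_sym.
have Hat : a != t by apply: contraNneq Ht => <-; rewrite !inE eqxx.
have [HD1 HD2] := light_struct HD HE Hb Hba Hst Hat.
by exists b, a, t; split.
Qed.

End Struct.

Section Main.
Variables (V : finType) (T : trigraph V).
Local Notation adj := (adj T).
Local Notation antiadj := (antiadj T).
Local Notation semiadj := (semiadj T).
Local Notation santiadj := (santiadj T).
Local Notation swD := (swD T).
Local Notation swcomp := (swcomp T).
Local Notation swedges := (swedges T).
Local Notation nbhd := (nbhd T).

Lemma no_hole5 a b c d e : Berge T ->
  adj a b -> adj b c -> adj c d -> adj d e -> adj a e ->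
  antiadj a c -> antiadj a d -> antiadj b d -> antiadj b e -> antiadj c e -> False.
Proof.
move=> [HB _] ab bc cd de ae ac ad bd be ce.
have Hh : hole T [:: a; b; c; d; e].
  apply: hole_like5 => //.
  rewrite /= !inE !negb_or.
  by rewrite (adj_neq ab) (adj_neq bc) (adj_neq cd) (adj_neq de) (adj_neq ae)
    (antiadj_neq ac) (antiadj_neq ad) (antiadj_neq bd) (antiadj_neq be) (antiadj_neq ce).
by move: (HB _ Hh).
Qed.

Lemma no_antihole6 a b c d e f :
  ~ (exists h : seq V, antihole T h /\ size h = 6) ->
  antiadj a b -> antiadj b c -> antiadj c d -> antiadj d e -> antiadj e f -> antiadj a f ->
  adj a c -> adj a d -> adj a e -> adj b d -> adj b e -> adj b f ->
  adj c e -> adj c f -> adj d f -> False.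
Proof.
move=> HA ab bc cd de ef af ac ad ae bd be bf ce cf df.
apply: HA; exists [:: a; b; c; d; e; f]; split => //.
apply: hole_like6 => //.
rewrite /= !inE !negb_or.
by rewrite (antiadj_neq ab) (antiadj_neq bc) (antiadj_neq cd) (antiadj_neq de)
  (antiadj_neq ef) (antiadj_neq af) (adj_neq ac) (adj_neq ad) (adj_neq ae)
  (adj_neq bd) (adj_neq be) (adj_neq bf) (adj_neq ce) (adj_neq cf) (adj_neq df).
Qed.

Lemma card3 (a b c : V) : #|[set a; b; c]| <= 3.
Proof. rewrite cardsU cards2 cards1; case: (_ != _); lia. Qed.

Lemma card4 (a b c d : V) : #|[set a; b; c; d]| <= 4.
Proof. rewrite cardsU cards1; move: (card3 a b c); lia. Qed.

Lemma compl_big (A : {set V}) n : #|A| <= n -> n + 2 <= #|V| -> 1 < #|~: A|.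
Proof. by move=> H1 H2; move: (cardsC A); lia. Qed.

Lemma swD_notin u (S : {set V}) : swD = S -> u \notin S -> u \notin swD.
Proof. by move=> ->. Qed.

Lemma caseB_smallY x y : ~ (exists A, balanced_skew_partition T A) ->
  swD = [set x; y] -> semiadj x y -> nbhd x :&: nbhd y = set0 ->
  (forall u v, u \notin swD -> v \notin swD -> u != v -> adj u v) ->
  1 < #|[set r | (r \notin [set x; y]) && adj y r]| -> False.
Proof.
move=> Hnb HD Hxy Hdis Hcl /card_gt1P [w [w' [Hw Hw' Hww']]].
move: Hw Hw'; rewrite !inE !negb_or => /andP [/andP [Hwx Hwy] Hyw] /andP [/andP [Hw'x Hw'y] Hyw'].
have Hnx : forall r, adj x r -> adj y r -> False.
  move=> r H1 H2; have : r \in nbhd x :&: nbhd y by rewrite !inE H1 H2.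
  by rewrite Hdis inE.
have Hw'D : w' \notin swD by rewrite HD !inE negb_or Hw'x Hw'y.
apply: Hnb; exists [set x; w]; apply: (@L1 _ _ _ _ w' y).
- by rewrite eq_sym.
- by apply/negP => H; apply: (Hnx w).
- by rewrite !inE negb_or Hw'x eq_sym.
- rewrite !inE negb_or; apply/andP; split; first by rewrite eq_sym (semi_neq Hxy).
  by rewrite eq_sym.
- exact: Hw'y.
move=> z Hz Hzw'; apply: strong_adj_nanti; first by left.
case E: (z == y); first by rewrite (eqP E) adj_sym.
apply: Hcl => //; last by rewrite eq_sym.
move: Hz; rewrite HD !inE !negb_or => /andP [-> _]; by rewrite E.
Qed.

Lemma caseB_small x y : Berge T -> ~ (exists A, balanced_skew_partition T A) -> 5 < #|V| ->
  swD = [set x; y] -> semiadj x y -> nbhd x :&: nbhd y = set0 ->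
  (forall u v, u \notin swD -> v \notin swD -> u != v -> adj u v) -> False.
Proof.
move=> HB Hnb H6 HD Hxy Hdis Hcl.
case: (classic (exists z, [/\ z \notin [set x; y], ~~ adj x z & ~~ adj y z])).
  move=> [z [Hz Hxz Hyz]].
  apply: Hnb; exists [set x; y; z]; apply: L2.
  - move=> u v Hu Hv Huv; apply: strong_adj_nanti.
      by left; move: Hu; rewrite HD !inE !negb_or => /andP [-> _].
    apply: Hcl => //.
      by move: Hu; rewrite HD !inE !negb_or => /andP [-> _].
    by move: Hv; rewrite HD !inE !negb_or => /andP [-> _].
  - by apply: (compl_big (card3 _ _ _)); lia.
  - apply: (@isolated_nconn _ _ _ z x); rewrite ?inE ?eqxx ?orbT //.
      by apply: contraNneq Hz => ->; rewrite !inE eqxx.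
    move=> w; rewrite !inE => /orP [/orP [] | ] /eqP ->; rewrite 1?adj_sym //.
    by rewrite /Defs.adj eqxx.
move=> HZ.
have Hcov : ~: [set x; y] \subset [set r | (r \notin [set x; y]) && adj x r] :|:
                                 [set r | (r \notin [set x; y]) && adj y r].
  apply/subsetP => r; rewrite inE => Hr; rewrite !inE; move: Hr; rewrite !inE => Hr; rewrite Hr /=.
  apply/negPn/negP; rewrite negb_or => /andP [H1 H2].
  by apply: HZ; exists r; split => //; rewrite !inE.
move: (subset_leq_card Hcov); rewrite cardsCs setCK.
move: (leq_card_setU [set r | (r \notin [set x; y]) && adj x r]
                     [set r | (r \notin [set x; y]) && adj y r]) => [Hle _].
move: (cards2 x y); rewrite (semi_neq Hxy) => Hc2 Hc.
case: (leqP #|[set r | (r \notin [set x; y]) && adj y r]| 1) => HY.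
  apply: (@caseB_smallY y x Hnb).
  - by rewrite HD setUC.
  - by rewrite semiadj_sym.
  - by rewrite setIC.
  - exact: Hcl.
  have -> : [set y; x] = [set x; y] by rewrite setUC.
  move: (cardsC [set x; y]) => Hcc. lia.
exact: (caseB_smallY Hnb HD Hxy Hdis Hcl HY).
Qed.

Lemma set3C (v x y : V) : [set v; x; y] = [set v; y; x].
Proof. by apply/setP => z; rewrite !inE orbAC. Qed.

Lemma caseB_lightX v x y : ~ (exists A, balanced_skew_partition T A) -> 5 < #|V| ->
  swD = [set v; x; y] -> semiadj v x -> semiadj v y -> x != y ->
  (forall w, w \notin [set v; x; y] -> santiadj v w) ->
  (forall u w, u \notin swD -> w \notin swD -> u != w -> adj u w) ->
  (forall r, r \notin [set v; x; y] -> ~~ adj x r) ->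
  (forall r, r \notin [set v; x; y] -> adj y r) -> False.
Proof.
move=> Hnb H6 HD Hvx Hvy Hxy Hv Hcl HX HY.
have : 1 < #|~: [set v; x; y]| by apply: (compl_big (card3 _ _ _)); lia.
case/card_gt1P => c [c2 [Hc _ _]]; move: Hc; rewrite inE => Hc.
have HcD : c \notin swD by rewrite HD.
apply: Hnb; exists [set v; x; c]; apply: L2.
- move=> u w Hu Hw Huw.
  move: Hu Hw; rewrite !inE !negb_or => /andP [/andP [Huv Hux] Huc] /andP [/andP [Hwv Hwx] Hwc].
  case Euy: (u == y).
    rewrite (eqP Euy); apply: strong_adj_nanti.
      by right; rewrite HD !inE !negb_or Hwv Hwx -(eqP Euy) eq_sym Huw.
    by apply: HY; rewrite !inE !negb_or Hwv Hwx -(eqP Euy) eq_sym Huw.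
  case Ewy: (w == y).
    rewrite (eqP Ewy); apply: strong_adj_nanti.
      by left; rewrite HD !inE !negb_or Huv Hux Euy.
    by rewrite adj_sym; apply: HY; rewrite !inE !negb_or Huv Hux Euy.
  apply: strong_adj_nanti; first by left; rewrite HD !inE !negb_or Huv Hux Euy.
  by apply: Hcl => //; rewrite HD !inE !negb_or ?Huv ?Hux ?Euy ?Hwv ?Hwx ?Ewy.
- by apply: (compl_big (card3 _ _ _)); lia.
- apply: (@isolated_nconn _ _ _ c v); rewrite ?inE ?eqxx ?orbT //.
    by apply: contraNneq Hc => ->; rewrite !inE eqxx.
  move=> w; rewrite !inE => /orP [/orP [] | ] /eqP ->.
  + by rewrite adj_sym; apply: santi_nadj; apply: Hv.
  + by rewrite adj_sym; apply: HX.
  + by rewrite /Defs.adj eqxx.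
Qed.

Lemma caseB_light v x y : Berge T -> ~ (exists A, balanced_skew_partition T A) -> 5 < #|V| ->
  swD = [set v; x; y] -> semiadj v x -> semiadj v y -> x != y ->
  (forall w, w \notin [set v; x; y] -> santiadj v w) -> santiadj x y ->
  nbhd x :&: nbhd y = [set v] ->
  (forall u w, u \notin swD -> w \notin swD -> u != w -> adj u w) -> False.
Proof.
move=> HB Hnb H6 HD Hvx Hvy Hxy Hv Hsxy Hn Hcl.
have Hcom : forall r, adj x r -> adj y r -> r = v.
  move=> r H1 H2; have : r \in nbhd x :&: nbhd y by rewrite !inE H1 H2.
  by rewrite Hn inE => /eqP.
have HnD : forall r, r \notin [set v; x; y] -> r != v.
  by move=> r; rewrite !inE !negb_or => /andP [/andP [H _] _].
case: (classic (exists z, [/\ z \notin [set v; x; y], ~~ adj x z & ~~ adj y z])).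
  move=> [z [Hz Hxz Hyz]].
  apply: Hnb; exists [set v; x; y; z]; apply: L2.
  - move=> u w Hu Hw Huw; apply: strong_adj_nanti.
      by left; move: Hu; rewrite HD !inE !negb_or => /andP [-> _].
    apply: Hcl => //.
      by move: Hu; rewrite HD !inE !negb_or => /andP [-> _].
    by move: Hw; rewrite HD !inE !negb_or => /andP [-> _].
  - by apply: (compl_big (card4 _ _ _ _)); lia.
  - apply: (@isolated_nconn _ _ _ z x); rewrite ?inE ?eqxx ?orbT //.
      by apply: contraNneq Hz => ->; rewrite !inE eqxx orbT.
    move=> w; rewrite !inE => /orP [/orP [/orP [] | ] | ] /eqP ->.
    + by apply: santi_nadj; rewrite -[santiadj _ _]/(Defs.santiadj T z v) /Defs.santiadj eq_sym theta_sym; apply: Hv.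
    + by rewrite adj_sym.
    + by rewrite adj_sym.
    + by rewrite /Defs.adj eqxx.
move=> HZ.
have HZ' : forall r, r \notin [set v; x; y] -> adj x r || adj y r.
  move=> r Hr; apply/negPn/negP; rewrite negb_or => /andP [H1 H2].
  by apply: HZ; exists r; split.
case: (classic (exists x1, x1 \notin [set v; x; y] /\ adj x x1)) => [[x1 [Hx1 Hxx1]]|HX]; last first.
  apply: (caseB_lightX Hnb H6 HD Hvx Hvy Hxy Hv Hcl).
    by move=> r Hr; apply/negP => H; apply: HX; exists r.
  move=> r Hr; case/orP: (HZ' r Hr) => // H; case: HX; by exists r.
case: (classic (exists y1, y1 \notin [set v; x; y] /\ adj y y1)) => [[y1 [Hy1 Hyy1]]|HY]; last first.
  apply: (@caseB_lightX v y x Hnb H6) => //.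
  - by rewrite HD set3C.
  - by rewrite eq_sym.
  - by move=> w; rewrite -set3C; apply: Hv.
  - by move=> r; rewrite -set3C => Hr; apply/negP => H; apply: HY; exists r.
  - move=> r; rewrite -set3C => Hr; case/orP: (HZ' r Hr) => // H; case: HY; by exists r.
have Hx1D : x1 \notin swD by rewrite HD.
have Hy1D : y1 \notin swD by rewrite HD.
have Hx1y : ~~ adj y x1 by apply/negP => H; move: (HnD _ Hx1); rewrite (Hcom _ Hxx1 H) eqxx.
have Hy1x : ~~ adj x y1 by apply/negP => H; move: (HnD _ Hy1); rewrite (Hcom _ H Hyy1) eqxx.
have Hx1y1 : x1 != y1 by apply: contraNneq Hx1y => ->.
apply: (@no_hole5 v x x1 y1 y HB).
- exact: semi_adj.
- exact: Hxx1.
- exact: Hcl.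
- by rewrite adj_sym.
- exact: semi_adj.
- exact: santi_anti (Hv _ Hx1).
- exact: santi_anti (Hv _ Hy1).
- apply: nadj_anti Hy1x; by apply: contraNneq Hy1 => ->; rewrite !inE eqxx ?orbT.
- exact: santi_anti.
- rewrite antiadj_sym; apply: nadj_anti Hx1y; by apply: contraNneq Hx1 => ->; rewrite !inE eqxx ?orbT.
Qed.

Lemma caseA_L2 x y a a' : ~ (exists A, balanced_skew_partition T A) ->
  swD = [set x; y] -> x != y ->
  (forall r, adj x r -> adj y r -> False) ->
  (forall p q, p \notin [set x; y] -> q \notin [set x; y] -> adj x p -> adj x q -> p != q -> adj p q) ->
  (forall r, r \notin [set x; y] -> adj x r || adj y r) ->
  a \notin [set x; y] -> adj x a -> (forall q, q \notin [set x; y] -> adj y q -> ~~ adj a q) ->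
  a' \notin [set x; y] -> adj x a' -> a' != a -> False.
Proof.
move=> Hnb HD Hxy Hnx CXa HZ Ha Hxa Hay Ha' Hxa' Ha'a.
apply: Hnb; exists [set r | [|| r == a, r == y | (r \notin [set x; y]) && adj y r]]; apply: L2.
- move=> u w; rewrite !inE !negb_or => /andP [Hua /andP [Huy HuY]] /andP [Hwa /andP [Hwy HwY]] Huw.
  have HX2 : forall r, r != y -> ~~ ((r != x) && (r != y) && adj y r) -> r != x -> adj x r.
    move=> r H0 H1 H2; have H3 : r \notin [set x; y] by rewrite !inE negb_or H0 H2.
    move: (HZ r H3) H1; rewrite H0 H2 /=; by case: (adj x r); case: (adj y r).
  case Eu: (u == x).
    rewrite (eqP Eu) in Huw *.
    apply: strong_adj_nanti; last by apply: HX2; rewrite // eq_sym.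
    by right; rewrite HD !inE negb_or eq_sym Huw.
  case Ew: (w == x).
    rewrite (eqP Ew) in Huw *.
    apply: strong_adj_nanti; first by left; rewrite HD !inE negb_or Eu.
    by rewrite adj_sym; apply: HX2 => //; rewrite Eu.
  apply: strong_adj_nanti; first by left; rewrite HD !inE negb_or Eu.
  apply: CXa => //; rewrite ?inE ?negb_or ?Eu ?Ew //.
    by apply: HX2 => //; rewrite Eu.
  by apply: HX2 => //; rewrite Ew.
- move: Ha Ha'; rewrite !inE !negb_or => /andP [Hax Hay'] /andP [Ha'x Ha'y].
  apply/card_gt1P; exists x, a'; rewrite !inE !negb_or eqxx /=; split.
  + apply/andP; split; first by rewrite eq_sym.
    by rewrite Hxy.
  + rewrite Ha'a Ha'y Ha'x /=.
    by apply/negP => H; apply: (Hnx a').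
  + by rewrite eq_sym.
- apply: (@isolated_nconn _ _ _ a y); rewrite ?inE ?eqxx ?orbT //.
    by apply: contraNneq Ha => ->; rewrite !inE eqxx orbT.
  move=> w; rewrite !inE => /orP [/eqP -> | /orP [/eqP -> | /andP [Hw1 Hw2]]].
  + by rewrite /Defs.adj eqxx.
  + by apply/negP => H; apply: (Hnx a) => //; rewrite adj_sym.
  + by apply: Hay; rewrite // !inE.
Qed.

Lemma caseA x y : Berge T -> ~ (exists A, balanced_skew_partition T A) ->
  ~ (exists h : seq V, antihole T h /\ size h = 6) -> 5 < #|V| ->
  swD = [set x; y] -> semiadj x y -> nbhd x :&: nbhd y = set0 ->
  clique T (~: (swD :|: nbhd x)) -> clique T (~: (swD :|: nbhd y)) ->
  (exists u v, santiadj u v /\ u \notin swD /\ v \notin swD) -> False.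
Proof.
move=> HB Hnb Hah H6 HD Hsxy Hdis CLx CLy [u0 [w0 [Hs [Hu0 Hw0]]]].
rewrite HD in Hu0 Hw0.
have Hxy := semi_neq Hsxy.
have Hnx : forall r, adj x r -> adj y r -> False.
  move=> r H1 H2; have : r \in nbhd x :&: nbhd y by rewrite !inE H1 H2.
  by rewrite Hdis inE.
have CX : forall p q, p \notin [set x; y] -> q \notin [set x; y] -> ~~ adj x p -> ~~ adj x q -> p != q -> adj p q.
  move=> p q Hp Hq Hxp Hxq Hpq; apply: CLx => //.
    by rewrite in_setC in_setU HD negb_or Hp /= /Defs.nbhd inE.
  by rewrite in_setC in_setU HD negb_or Hq /= /Defs.nbhd inE.
have CY : forall p q, p \notin [set x; y] -> q \notin [set x; y] -> ~~ adj y p -> ~~ adj y q -> p != q -> adj p q.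
  move=> p q Hp Hq Hxp Hxq Hpq; apply: CLy => //.
    by rewrite in_setC in_setU HD negb_or Hp /= /Defs.nbhd inE.
  by rewrite in_setC in_setU HD negb_or Hq /= /Defs.nbhd inE.
have HnDx : forall r, r \notin [set x; y] -> r != x.
  by move=> r; rewrite !inE negb_or => /andP [].
have HnDy : forall r, r \notin [set x; y] -> r != y.
  by move=> r; rewrite !inE negb_or => /andP [].
have nadjx : forall r, adj y r -> ~~ adj x r.
  by move=> r H; apply/negP => H'; apply: (Hnx r).
have nadjy : forall r, adj x r -> ~~ adj y r.
  by move=> r H; apply/negP => H'; apply: (Hnx r).
have [x1 [y1 [Hx1 Hy1 Hxx1 Hyy1 Hx1y1]]] : exists x1 y1,
    [/\ x1 \notin [set x; y], y1 \notin [set x; y], adj x x1, adj y y1 & ~~ adj x1 y1].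
  have Hn := santi_nadj Hs.
  have Hne : u0 != w0 by case/andP: Hs.
  case Ex: (adj x u0).
    exists u0, w0; split => //.
    apply/negPn/negP => Hyw.
    by move: (CY _ _ Hu0 Hw0 (nadjy _ Ex) Hyw Hne); rewrite (negbTE Hn).
  have Exw : adj x w0.
    apply/negPn/negP => Hxw.
    by move: (CX _ _ Hu0 Hw0 (negbT Ex) Hxw Hne); rewrite (negbTE Hn).
  exists w0, u0; split => //; last by rewrite adj_sym.
  apply/negPn/negP => Hyu.
  by move: (CY _ _ Hu0 Hw0 Hyu (nadjy _ Exw) Hne); rewrite (negbTE Hn).
case: (classic (exists z, [/\ z \notin [set x; y], ~~ adj x z & ~~ adj y z])).
  move=> [z [Hz Hxz Hyz]].
  have Hx1z : x1 != z by apply: contraNneq Hxz => <-.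
  have Hzy1 : z != y1 by apply: contraNneq Hyz => ->.
  have Hx1y1' : x1 != y1 by apply: contraNneq (nadjy _ Hxx1) => ->.
  apply: (@no_hole5 x x1 z y1 y HB).
  - exact: Hxx1.
  - exact: (CY _ _ Hx1 Hz (nadjy _ Hxx1) Hyz Hx1z).
  - exact: (CX _ _ Hz Hy1 Hxz (nadjx _ Hyy1) Hzy1).
  - by rewrite adj_sym.
  - exact: semi_adj.
  - by apply: nadj_anti Hxz; rewrite eq_sym HnDx.
  - by apply: nadj_anti (nadjx _ Hyy1); rewrite eq_sym HnDx.
  - exact: nadj_anti.
  - by rewrite antiadj_sym; apply: nadj_anti (nadjy _ Hxx1); rewrite eq_sym HnDy.
  - by rewrite antiadj_sym; apply: nadj_anti Hyz; rewrite eq_sym HnDy.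
move=> HZ.
have HZ' : forall r, r \notin [set x; y] -> adj x r || adj y r.
  move=> r Hr; apply/negPn/negP; rewrite negb_or => /andP [H1 H2].
  by apply: HZ; exists r; split.
have CXa : forall p q, p \notin [set x; y] -> q \notin [set x; y] -> adj x p -> adj x q -> p != q -> adj p q.
  by move=> p q Hp Hq Hxp Hxq; apply: CY => //; apply: nadjy.
have CYa : forall p q, p \notin [set x; y] -> q \notin [set x; y] -> adj y p -> adj y q -> p != q -> adj p q.
  by move=> p q Hp Hq Hxp Hxq; apply: CX => //; apply: nadjx.
have no2K2 : forall a1 a2 b1 b2, a1 \notin [set x; y] -> a2 \notin [set x; y] ->
    b1 \notin [set x; y] -> b2 \notin [set x; y] ->
    adj x a1 -> adj x a2 -> adj y b1 -> adj y b2 -> ~~ adj a1 b1 -> ~~ adj a2 b2 ->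
    adj a1 b2 -> adj a2 b1 -> False.
  move=> a1 a2 b1 b2 Ha1 Ha2 Hb1 Hb2 Hxa1 Hxa2 Hyb1 Hyb2 H11 H22 H12 H21.
  have Hb1a1 : b1 != a1 by apply: contraNneq (nadjy _ Hxa1) => <-.
  have Hb12 : b1 != b2 by apply: contraNneq H11 => ->.
  have Ha12 : a1 != a2 by apply: contraNneq H11 => ->.
  apply: (@no_antihole6 x b1 a1 y a2 b2 Hah).
  - by apply: nadj_anti (nadjx _ Hyb1); rewrite eq_sym HnDx.
  - by apply: nadj_anti => //; rewrite adj_sym.
  - by rewrite antiadj_sym; apply: nadj_anti (nadjy _ Hxa1); rewrite eq_sym HnDy.
  - by apply: nadj_anti (nadjy _ Hxa2); rewrite eq_sym HnDy.
  - by apply: nadj_anti H22; apply: contraNneq (nadjx _ Hyb2) => <-.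
  - by apply: nadj_anti (nadjx _ Hyb2); rewrite eq_sym HnDx.
  - exact: Hxa1.
  - exact: semi_adj.
  - exact: Hxa2.
  - by rewrite adj_sym.
  - by rewrite adj_sym.
  - exact: (CYa _ _ Hb1 Hb2 Hyb1 Hyb2 Hb12).
  - exact: (CXa _ _ Ha1 Ha2 Hxa1 Hxa2 Ha12).
  - exact: H12.
  - exact: Hyb2.
pose F r := #|[set q | [&& q \notin [set x; y], adj y q & ~~ adj r q]]|.
have Px1 : (x1 \notin [set x; y]) && adj x x1 by rewrite Hx1 Hxx1.
case: (@arg_maxnP _ x1 (fun r => (r \notin [set x; y]) && adj x r) F Px1) => a /andP [Ha Hxa] Hmax.
case: (classic (forall q, q \notin [set x; y] -> adj y q -> ~~ adj a q)) => Hi.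
  case: (classic (exists a', [/\ a' \notin [set x; y], adj x a' & a' != a])).
    move=> [a' [Ha' Hxa' Ha'a]].
    exact: (caseA_L2 Hnb HD Hxy Hnx CXa HZ' Ha Hxa Hi Ha' Hxa' Ha'a).
  move=> HXa.
  have HXa' : forall p, p \notin [set x; y] -> adj x p -> p = a.
    move=> p Hp Hxp; apply/eqP; apply: NNPP => Hpa; apply: HXa; exists p; split => //.
    by apply/negP.
  have Hcov : ~: [set x; y] \subset [set a] :|: [set r | (r \notin [set x; y]) && adj y r].
    apply/subsetP => r; rewrite inE => Hr; rewrite in_setU in_set1.
    case/orP: (HZ' r Hr) => H; first by rewrite (HXa' r Hr H) eqxx.
    by rewrite inE Hr H orbT.
  move: (subset_leq_card Hcov) (leq_card_setU [set a] [set r | (r \notin [set x; y]) && adj y r]).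
  rewrite cards1 => Hc [Hle _].
  move: (cardsC [set x; y]); rewrite cards2 Hxy => Hcc.
  have : 1 < #|[set r | (r \notin [set x; y]) && adj y r]| by lia.
  case/card_gt1P => b1 [b2 [Hb1 Hb2 Hb12]].
  have [b [Hb Hby1]] : exists b, b \in [set r | (r \notin [set x; y]) && adj y r] /\ b != y1.
    case E: (b1 == y1); last by exists b1; rewrite E.
    by exists b2; split => //; rewrite -(eqP E) eq_sym.
  move: Hb; rewrite inE => /andP [Hb Hyb].
  have E : [set y; x] = [set x; y] by rewrite setUC.
  apply: (@caseA_L2 y x y1 b Hnb); rewrite ?E //.
  - by rewrite eq_sym.
  - by move=> r H1 H2; apply: (Hnx r).
  - by move=> r Hr; rewrite orbC; apply: HZ'.
  - move=> q Hq Hxq; rewrite (HXa' q Hq Hxq) adj_sym; exact: Hi.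
have [y' [Hy' Hyy' Hay']] : exists y', [/\ y' \notin [set x; y], adj y y' & adj a y'].
  apply: NNPP => Hn; apply: Hi => q Hq Hyq; apply/negP => Haq.
  by apply: Hn; exists q; split.
case: (classic (forall p, p \notin [set x; y] -> adj x p -> adj p y')) => Hii.
  have Hy'y1 : y' != y1 by apply: contraNneq Hx1y1 => <-; apply: Hii.
  apply: Hnb; exists [set x; y1]; apply: (@L1 _ _ _ _ y' y).
  - by rewrite eq_sym HnDx.
  - exact: nadjx.
  - by rewrite !inE negb_or HnDx // Hy'y1.
  - by rewrite !inE negb_or eq_sym Hxy eq_sym HnDy.
  - exact: HnDy.
  move=> z Hz Hzy'; apply: strong_adj_nanti; first by left; rewrite HD.
  case Ezy: (z == y); first by rewrite (eqP Ezy) adj_sym.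
  have Hz' : z \notin [set x; y].
    by move: Hz; rewrite !inE !negb_or Ezy => /andP [-> _].
  case/orP: (HZ' z Hz') => H; first by rewrite adj_sym; apply: Hii.
  by apply: CYa => //; rewrite eq_sym.
have [x' [Hx' Hxx' Hx'y']] : exists x', [/\ x' \notin [set x; y], adj x x' & ~~ adj x' y'].
  apply: NNPP => Hn; apply: Hii => p Hp Hxp; apply/negPn/negP => H.
  by apply: Hn; exists p; split.
have Hpr : [set q | [&& q \notin [set x; y], adj y q & ~~ adj a q]] \proper
           [set q | [&& q \notin [set x; y], adj y q & ~~ adj x' q]].
  apply/properP; split.
    apply/subsetP => q; rewrite !inE => /and3P [Hq Hyq Haq].
    have Hq' : q \notin [set x; y] by rewrite !inE.
    apply/and3P; split => //.
    apply/negP => Hx'q.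
    exact: (no2K2 a x' q y' Ha Hx' Hq' Hy' Hxa Hxx' Hyq Hyy' Haq Hx'y' Hay' Hx'q).
  exists y'; first by rewrite inE Hy' Hyy' Hx'y'.
  by rewrite inE Hay' !andbF.
have Hm : F x' <= F a by apply: Hmax; rewrite Hx' Hxx'.
by move: (leq_trans (proper_card Hpr) Hm); rewrite ltnn.
Qed.

End Main.

Unset Implicit Arguments.

Lemma swD_comp (V : finType) (T : trigraph V) d :
  (forall D1 D2, swcomp T D1 -> swcomp T D2 -> D1 = D2) ->
  d \in swD T -> exists D0, swcomp T D0 /\ swD T = D0.
Proof.
move=> Hu; rewrite inE => /existsP [D0 /andP [HD0 _]].
exists D0; split => //; apply/setP => w; rewrite inE; apply/existsP/idP.
  by case=> D /andP [HD Hw]; rewrite -(Hu _ _ HD HD0).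
by move=> Hw; exists D0; rewrite HD0.
Qed.

Theorem theorem3p3 (V : finType) (T : trigraph V) :
  inF T ->
  ~ (exists A : {set V}, balanced_skew_partition T A) ->
  ~ (exists h : seq V, antihole T h /\ size h = 6) ->
  ~ favorable T ->
  complete T \/ #|V| <= 5.
Proof.
move=> HF Hnb Hah Hnf.
case: (leqP #|V| 5) => H6; first by right.
have HF' := HF; case: HF' => [HB [Huniq [HE2 [Hsmall Hlight]]]].
case: (classic (exists u v, santiadj T u v /\ u \notin swD T /\ v \notin swD T)) => HP.
  exfalso.
  have [x [y [Hxy HD Cx Cy]]] : exists x y, [/\ x != y, swD T = [set x; y],
      clique T (~: (swD T :|: nbhd T x)) & clique T (~: (swD T :|: nbhd T y))].
    apply: NNPP => Hn; apply: Hnf; split; first exact: ltnW.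
    split => // x y Hxy HD.
    case: (classic (clique T (~: (swD T :|: nbhd T x)))) => Hcx; last by left.
    case: (classic (clique T (~: (swD T :|: nbhd T y)))) => Hcy; last by right.
    by case: Hn; exists x, y; split.
  have [D0 [HD0 HsD]] : exists D0, swcomp T D0 /\ swD T = D0.
    by apply: (@swD_comp _ _ x) => //; rewrite HD !inE eqxx.
  case: (comp_struct HD0 (HE2 _ HD0)).
    move=> [a [b [Hab HDab HE1]]].
    have Hsxy : semiadj T x y.
      have : [set a; b] = [set x; y] by rewrite -HDab -HsD.
      move=> E.
      have Ha : a \in [set x; y] by rewrite -E !inE eqxx.
      have Hb : b \in [set x; y] by rewrite -E !inE eqxx orbT.
      have Hab' := semi_neq Hab.
      case/set2P: Ha => Ea; case/set2P: Hb => Eb; subst.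
      - by rewrite eqxx in Hab'.
      - done.
      - by rewrite semiadj_sym.
      - by rewrite eqxx in Hab'.
    have HxD0 : x \in D0 by rewrite -HsD HD !inE eqxx.
    have Hdis := Hsmall _ _ _ HD0 HE1 HxD0 Hsxy.
    exact: (caseA HB Hnb Hah H6 HD Hsxy Hdis Cx Cy HP).
  move=> [v [x' [y' [Hvx Hvy Hxy' HDe HE]]]].
  have : #|[set v; x'; y']| = #|[set x; y]| by rewrite -HDe -HsD HD.
  rewrite cards2 Hxy cardsU cards2 cards1 (semi_neq Hvx).
  have -> : [set v; x'] :&: [set y'] = set0.
    apply/setP => z; rewrite !inE.
    case E: (z == y'); rewrite ?andbF // andbT.
    rewrite (eqP E); apply/negP => /orP [/eqP Hyv | /eqP Hyx].
      by move: (semi_neq Hvy); rewrite Hyv eqxx.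
    by move: Hxy'; rewrite Hyx eqxx.
  by rewrite cards0.
have Hcl : forall u v, u \notin swD T -> v \notin swD T -> u != v -> adj T u v.
  move=> u v Hu Hv Huv; apply: NNPP => Hn; apply: HP; exists u, v; split => //.
  by apply: nadj_santi => //; apply/negP.
case: (classic (exists d, d \in swD T)) => Hd; last first.
  left => u v _ _ Huv; apply: Hcl => //; apply/negP => H; apply: Hd; by [exists u | exists v].
exfalso.
case: Hd => d Hd.
have [D0 [HD0 HsD]] := swD_comp _ _ _ Huniq Hd.
case: (comp_struct HD0 (HE2 _ HD0)).
  move=> [x [y [Hxy HDe HE1]]].
  have HxD0 : x \in D0 by rewrite HDe !inE eqxx.
  have Hdis := Hsmall _ _ _ HD0 HE1 HxD0 Hxy.
  by apply: (caseB_small HB Hnb H6 _ Hxy Hdis Hcl); rewrite HsD.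
move=> [v [x [y [Hvx Hvy Hxy HDe HE]]]].
have HvD0 : v \in D0 by rewrite HDe !inE eqxx.
have [Hv [Hsxy Hn]] := Hlight _ _ _ _ HD0 HE HvD0 Hvx Hvy Hxy.
by apply: (caseB_light HB Hnb H6 _ Hvx Hvy Hxy Hv Hsxy Hn Hcl); rewrite HsD.
Qed.
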